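(* Let $t\ge1$, $k\ge t$, and let $v_1,v_2,\eta,\mu$ be positive integers such that there exist $\mu$ pairwise compatible simple COA$_\eta(t,k,v_2)$'s. Suppose there are non-negative integers $m_1,\dots,m_r$ and positive integers $\mu_1,\dots,\mu_r,\lambda_1,\dots,\lambda_r$ such that (1) $m_1\mu_1+\cdots+m_r\mu_r\le\mu$, and (2) for each $1\le i\le r$ a $\mu_i$-row-divisible COA$_{\lambda_i}(t,k,v_1)$ exists. Then a simple COA$_{\eta(m_1\lambda_1+\cdots+m_r\lambda_r)}(t,k,v_1v_2)$ exists (provided $m_1\lambda_1+\cdots+m_r\lambda_r\ge1$).
   Context: A COA$_\lambda(t,k,v)$ is a $\lambda v^t\times k$ array over a $v$-set $V$ in which every set of $t$ consecutive columns contains every $t$-tuple exactly $\lambda$ times as a row. An array (not necessarily a COA) has the simple property if for any two distinct sets of $t$ consecutive columns sharing exactly $i$ columns ($0\le i\le t-1$), the subarray on the $2t-i$ columns of their union contains each $(2t-i)$-tuple at most once as a row; a simple COA is a COA with this property. A COA$_\lambda(t,k,v)$ is $\mu$-row-divisible if its rows can be partitioned into $\mu$ subarrays each having the simple property. Two simple COAs over the same symbol set are compatible if the array obtained by stacking all rows of both (their superimposition) is a simple COA; a family of simple COAs over the same symbol set is compatible if its members are pairwise compatible. *)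

(* Defs.v *)
From mathcomp Require Import all_boot.
Set Implicit Arguments. Unset Strict Implicit. Unset Printing Implicit Defensive.

Definition row (k v : nat) := {ffun 'I_k -> 'I_v}.
Definition array (k v : nat) := seq (row k v).

Definition inwin (t s : nat) (c : nat) : bool := (s <= c) && (c < s + t).

Definition matches_win (t k v : nat) (s : nat) (x : {ffun 'I_t -> 'I_v})
  (r : row k v) : bool :=
  [forall j : 'I_t, forall c : 'I_k, (val c == s + val j) ==> (r c == x j)].

Definition is_COA (lam t k v : nat) (A : array k v) : Prop :=
  size A = lam * v ^ t /\
  forall s : nat, s + t <= k ->
    forall x : {ffun 'I_t -> 'I_v}, count (matches_win s x) A = lam.

Definition agree_union (t k v : nat) (s1 s2 : nat) (r1 r2 : row k v) : bool :=
  [forall c : 'I_k, (inwin t s1 c || inwin t s2 c) ==> (r1 c == r2 c)].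

(* A tuple on the union is represented by any full row extending it. *)
Definition simple_prop (t k v : nat) (A : array k v) : Prop :=
  forall s1 s2 : nat, s1 + t <= k -> s2 + t <= k -> s1 <> s2 ->
    forall y : row k v, count (fun r => agree_union t s1 s2 r y) A <= 1.

Definition simple_COA (lam t k v : nat) (A : array k v) : Prop :=
  is_COA lam t A /\ simple_prop t A.

Definition row_divisible (mu lam t k v : nat) (A : array k v) : Prop :=
  is_COA lam t A /\
  exists parts : seq (array k v),
    [/\ size parts = mu, perm_eq (flatten parts) A,
        all (fun P => size P != 0) parts &
        forall P, P \in parts -> simple_prop t P].

Definition compatible (eta t k v : nat) (A B : array k v) : Prop :=
  simple_COA (2 * eta) t (A ++ B).

(* Main.v *)
Require Import Defs.
From mathcomp Require Import all_boot.
From mathcomp Require Import zify.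
From Stdlib Require Import ClassicalEpsilon.
Set Implicit Arguments. Unset Strict Implicit. Unset Printing Implicit Defensive.

Lemma enc_proof v1 v2 (a : 'I_v1) (b : 'I_v2) : a * v2 + b < v1 * v2.
Proof. have := ltn_ord a; have := ltn_ord b; nia. Qed.

Definition enc v1 v2 (a : 'I_v1) (b : 'I_v2) : 'I_(v1 * v2) :=
  Ordinal (enc_proof a b).

Lemma dec1_proof v1 v2 (hv2 : 0 < v2) (z : 'I_(v1 * v2)) : z %/ v2 < v1.
Proof. by rewrite ltn_divLR. Qed.

Definition dec1 v1 v2 (hv2 : 0 < v2) (z : 'I_(v1 * v2)) : 'I_v1 :=
  Ordinal (dec1_proof hv2 z).
Definition dec2 v1 v2 (hv2 : 0 < v2) (z : 'I_(v1 * v2)) : 'I_v2 :=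
  Ordinal (ltn_pmod z hv2).

Lemma enc_eq v1 v2 (hv2 : 0 < v2) (a : 'I_v1) (b : 'I_v2) z :
  (enc a b == z) = (a == dec1 hv2 z) && (b == dec2 hv2 z).
Proof.
apply/eqP/andP => [<-|[/eqP Ha /eqP Hb]].
  split; apply/eqP/val_inj => /=.
    by rewrite divnMDl // divn_small ?addn0.
  by rewrite modnMDl modn_small.
apply/val_inj => /=; rewrite Ha Hb /=; by rewrite -divn_eq.
Qed.

Definition pairr k v1 v2 (p : row k v1) (q : row k v2) : row k (v1 * v2) :=
  [ffun c => enc (p c) (q c)].

Definition prodA k v1 v2 (P : array k v1) (C : array k v2) : array k (v1 * v2) :=
  [seq pairr p q | p <- P, q <- C].

Lemma count_prodA k v1 v2 (P : array k v1) (C : array k v2) a a1 a2 :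
  (forall p q, a (pairr p q) = a1 p && a2 q) ->
  count a (prodA P C) = count a1 P * count a2 C.
Proof.
move=> H; elim: P => //= p P IH.
rewrite /prodA allpairs_cons count_cat -/(prodA P C) IH count_map mulnDl.
congr (_ + _).
case E: (a1 p); rewrite ?mul1n ?mul0n.
  by apply: eq_count => q /=; rewrite H E.
by rewrite (eq_count (a2 := pred0)) ?count_pred0 // => q /=; rewrite H E.
Qed.

Definition dfun1 (I : finType) v1 v2 (hv2 : 0 < v2) (x : {ffun I -> 'I_(v1 * v2)}) :
  {ffun I -> 'I_v1} := [ffun j => dec1 hv2 (x j)].
Definition dfun2 (I : finType) v1 v2 (hv2 : 0 < v2) (x : {ffun I -> 'I_(v1 * v2)}) :
  {ffun I -> 'I_v2} := [ffun j => dec2 hv2 (x j)].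

Lemma matches_pair t k v1 v2 (hv2 : 0 < v2) s (x : {ffun 'I_t -> 'I_(v1 * v2)}) (p : row k v1) (q : row k v2) :
  matches_win s x (pairr p q) =
  matches_win s (dfun1 hv2 x) p && matches_win s (dfun2 hv2 x) q.
Proof.
apply/idP/andP => [H|[H1 H2]].
  split; apply/forallP => j; apply/forallP => c; apply/implyP => E;
    have := implyP (forallP (forallP H j) c) E;
    by rewrite !ffunE (enc_eq hv2) => /andP[].
apply/forallP => j; apply/forallP => c; apply/implyP => E.
rewrite ffunE (enc_eq hv2); apply/andP; split.
  by have := implyP (forallP (forallP H1 j) c) E; rewrite ffunE.
by have := implyP (forallP (forallP H2 j) c) E; rewrite ffunE.
Qed.

Lemma agree_pair t k v1 v2 (hv2 : 0 < v2) s1 s2 y (p : row k v1) (q : row k v2) :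
  agree_union t s1 s2 (pairr p q) y =
  agree_union t s1 s2 p (dfun1 hv2 y) && agree_union t s1 s2 q (dfun2 hv2 y).
Proof.
apply/idP/andP => [H|[H1 H2]].
  split; apply/forallP => c; apply/implyP => E;
    have := implyP (forallP H c) E;
    by rewrite !ffunE (enc_eq hv2) => /andP[].
apply/forallP => c; apply/implyP => E.
rewrite ffunE (enc_eq hv2); apply/andP; split.
  by have := implyP (forallP H1 c) E; rewrite ffunE.
by have := implyP (forallP H2 c) E; rewrite ffunE.
Qed.

Lemma sumn_mulr T (f : T -> nat) c s :
  sumn (map (fun x => f x * c) s) = sumn (map f s) * c.
Proof. by elim: s => //= x s ->; rewrite mulnDl. Qed.

Lemma sumn_le (T : eqType) (f g : T -> nat) s :
  (forall x, x \in s -> f x <= g x) -> sumn (map f s) <= sumn (map g s).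
Proof.
elim: s => //= x s IH H; apply: leq_add; first by apply: H; rewrite inE eqxx.
by apply: IH => y Hy; apply: H; rewrite inE Hy orbT.
Qed.

Lemma sumn_uniq1 mu (g : 'I_mu -> nat) (idx : seq 'I_mu) :
  (forall f, g f <= 1) -> (forall f f', f != f' -> g f + g f' <= 1) ->
  uniq idx -> sumn (map g idx) <= 1.
Proof.
move=> H1 H2; elim: idx => //= a s IH /andP[Ha Hu].
case E: (g a) => [|n]; first by rewrite add0n IH.
have -> : sumn (map g s) = 0.
  elim: s Ha {IH Hu} => //= b s IH'; rewrite inE negb_or => /andP[Hab Has].
  have := H2 _ _ Hab; rewrite E IH' // addn0; lia.
have := H1 a; rewrite E; lia.
Qed.

Lemma map_fst_zip (S T U : Type) (f : S -> U) (s : seq S) (t : seq T) :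
  size s <= size t -> [seq f x.1 | x <- zip s t] = map f s.
Proof. by move=> H; rewrite -[in RHS](unzip1_zip H) -map_comp. Qed.

Lemma map_snd_zip (S T U : Type) (f : T -> U) (s : seq S) (t : seq T) :
  size t <= size s -> [seq f x.2 | x <- zip s t] = map f t.
Proof. by move=> H; rewrite -[in RHS](unzip2_zip H) -map_comp. Qed.

Lemma core t k v1 v2 (hv2 : 0 < v2) eta mu (fam : 'I_mu -> array k v2)
  (Hfam : forall i, simple_COA eta t (fam i))
  (Hcomp : forall i j, i != j -> compatible eta t (fam i) (fam j))
  (Ps : seq (array k v1)) (idx : seq 'I_mu) L :
  size idx = size Ps -> uniq idx ->
  (forall P, P \in Ps -> simple_prop t P) ->
  (forall s, s + t <= k -> forall x : {ffun 'I_t -> 'I_v1},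
     count (matches_win s x) (flatten Ps) = L) ->
  size (flatten Ps) = L * v1 ^ t ->
  simple_COA (eta * L) t
    (flatten [seq prodA PF.1 (fam PF.2) | PF <- zip Ps idx]).
Proof.
move=> Hsz Hu Hsimp Hcnt Hsize.
have Hz1 : unzip1 (zip Ps idx) = Ps by rewrite unzip1_zip // Hsz.
have Hz2 : unzip2 (zip Ps idx) = idx by rewrite unzip2_zip // Hsz.
split; [split|].
- rewrite size_flatten /shape -map_comp.
  rewrite (eq_map (g := fun PF => size PF.1 * (eta * v2 ^ t))); last first.
    by move=> PF /=; rewrite size_allpairs; case: (Hfam PF.2) => [[-> _] _].
  rewrite sumn_mulr map_fst_zip ?Hsz // -/(shape Ps) -size_flatten Hsize expnMn.
  nia.
- move=> s Hs x; rewrite count_flatten -map_comp.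
  rewrite (eq_map (g := fun PF => count (matches_win s (dfun1 hv2 x)) PF.1 * eta)); last first.
    move=> PF /=.
    rewrite (@count_prodA _ _ _ _ _ _ (matches_win s (dfun1 hv2 x))
                         (matches_win s (dfun2 hv2 x))); last first.
      by move=> p q; exact: matches_pair.
    by case: (Hfam PF.2) => [[_ HH] _]; rewrite HH.
  by rewrite sumn_mulr map_fst_zip ?Hsz // -count_flatten Hcnt // mulnC.
- move=> s1 s2 H1 H2 Hne y; rewrite count_flatten -map_comp.
  apply: leq_trans (sumn_le (g := fun PF => count (fun r => agree_union t s1 s2 r (dfun2 hv2 y)) (fam PF.2)) _) _.
    move=> PF HPF /=.
    rewrite (@count_prodA _ _ _ _ _ _ (fun r => agree_union t s1 s2 r (dfun1 hv2 y))
                         (fun r => agree_union t s1 s2 r (dfun2 hv2 y))); last first.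
      by move=> p q; exact: agree_pair.
    have HP1 : PF.1 \in Ps by rewrite -Hz1; apply: map_f.
    apply: leq_trans (leq_mul (Hsimp _ HP1 s1 s2 H1 H2 Hne (dfun1 hv2 y)) (leqnn _)) _.
    by rewrite mul1n.
  rewrite (map_snd_zip (fun f => count ((agree_union t s1 s2)^~ (dfun2 hv2 y)) (fam f))) ?Hsz //.
  apply: sumn_uniq1 Hu.
    by move=> f; case: (Hfam f) => _ /(_ s1 s2 H1 H2 Hne).
  move=> f f' Hff; case: (Hcomp f f' Hff) => _ /(_ s1 s2 H1 H2 Hne (dfun2 hv2 y)).
  by rewrite count_cat.
Qed.

Lemma h_flatten T (h : seq T -> nat) :
  h [::] = 0 -> (forall a b, h (a ++ b) = h a + h b) ->
  forall XS, h (flatten XS) = sumn (map h XS).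
Proof. by move=> H0 Hc; elim => //= X XS IH; rewrite Hc IH. Qed.

Lemma h_nseq T (h : seq T -> nat) :
  h [::] = 0 -> (forall a b, h (a ++ b) = h a + h b) ->
  forall n X, h (flatten (nseq n X)) = n * h X.
Proof.
move=> H0 Hc n X; rewrite (h_flatten H0 Hc) map_nseq sumn_nseq; exact: mulnC.
Qed.

Lemma mem_flatten_nseq (T : eqType) n (s : seq T) (y : T) :
  y \in flatten (nseq n s) -> y \in s.
Proof. by elim: n => //= n IH; rewrite mem_cat => /orP[//|/IH]. Qed.

Lemma sumn_enum r (f : 'I_r -> nat) : sumn (map f (enum 'I_r)) = \sum_(i < r) f i.
Proof. by rewrite sumnE big_map big_enum. Qed.

Theorem mainTheorem13 (t k v1 v2 eta mu r : nat)
  (m mu_ lam : 'I_r -> nat) :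
  1 <= t -> t <= k -> 0 < v1 -> 0 < v2 -> 0 < eta -> 0 < mu ->
  (exists fam : 'I_mu -> array k v2,
     (forall i, simple_COA eta t (fam i)) /\
     (forall i j, i != j -> compatible eta t (fam i) (fam j))) ->
  (forall i, 0 < mu_ i) -> (forall i, 0 < lam i) ->
  \sum_(i < r) m i * mu_ i <= mu ->
  (forall i, exists A : array k v1, row_divisible (mu_ i) (lam i) t A) ->
  1 <= \sum_(i < r) m i * lam i ->
  exists B : array k (v1 * v2),
    simple_COA (eta * \sum_(i < r) m i * lam i) t B.
Proof.
move=> _ _ _ hv2 _ _ [fam [Hfam Hcomp]] _ _ Hmu H _.
have H' : forall i, exists parts : seq (array k v1),
  [/\ size parts = mu_ i,
      (forall s, s + t <= k -> forall x : {ffun 'I_t -> 'I_v1},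
         count (matches_win s x) (flatten parts) = lam i),
      size (flatten parts) = lam i * v1 ^ t &
      forall P, P \in parts -> simple_prop t P].
  move=> i; case: (H i) => A [[HsA HcA] [parts [Hs Hp _ Hsimp]]].
  exists parts; split => //; last by rewrite (perm_size Hp).
  by move=> s Hs' x; have := (permP Hp) (matches_win s x); rewrite HcA.
pose parts := fun i => proj1_sig (constructive_indefinite_description _ (H' i)).
have Hparts : forall i, _ := fun i => proj2_sig (constructive_indefinite_description _ (H' i)).
pose Ps := flatten [seq flatten (nseq (m i) (parts i)) | i <- enum 'I_r].
have hs0 : forall (T : Type), size ([::] : seq T) = 0 by [].
have hsc : forall (T : Type) (a b : seq T), size (a ++ b) = size a + size b by move=> *; exact: size_cat.
have HsPs : size Ps = \sum_(i < r) m i * mu_ i.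
  rewrite /Ps (h_flatten (hs0 _) (@hsc _)) -map_comp -sumn_enum; congr sumn.
  apply: eq_map => i /=; rewrite (h_nseq (hs0 _) (@hsc _)).
  by case: (Hparts i) => -> _ _ _.
pose idx := take (size Ps) (enum 'I_mu).
exists (flatten [seq prodA PF.1 (fam PF.2) | PF <- zip Ps idx]).
apply: (core hv2 Hfam Hcomp).
- by rewrite size_takel // size_enum_ord HsPs.
- exact/take_uniq/enum_uniq.
- move=> P; rewrite /Ps => /flatten_mapP [i _ /mem_flatten_nseq HP].
  by case: (Hparts i) => _ _ _; apply.
- move=> s Hs x.
  have h0 : count (matches_win s x) (flatten ([::] : seq (array k v1))) = 0 by [].
  have hc : forall a b : seq (array k v1), count (matches_win s x) (flatten (a ++ b)) =
     count (matches_win s x) (flatten a) + count (matches_win s x) (flatten b).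
    by move=> a b; rewrite flatten_cat count_cat.
  rewrite /Ps (@h_flatten _ (fun XS : seq (array k v1) => count (matches_win s x) (flatten XS)) h0 hc) -map_comp -sumn_enum; congr sumn.
  apply: eq_map => i /=; rewrite (@h_nseq _ (fun XS : seq (array k v1) => count (matches_win s x) (flatten XS)) h0 hc).
  by case: (Hparts i) => _ HH _ _; rewrite HH.
- have h0 : size (flatten ([::] : seq (array k v1))) = 0 by [].
  have hc : forall a b : seq (array k v1), size (flatten (a ++ b)) =
     size (flatten a) + size (flatten b).
    by move=> a b; rewrite flatten_cat size_cat.
  rewrite /Ps (@h_flatten _ (fun XS : seq (array k v1) => size (flatten XS)) h0 hc) -map_comp big_distrl /= -sumn_enum; congr sumn.
  apply: eq_map => i /=; rewrite (@h_nseq _ (fun XS : seq (array k v1) => size (flatten XS)) h0 hc).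
  by case: (Hparts i) => _ _ -> _; rewrite mulnA.
Qed.
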